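(* Let $r\in\{3,5\}$, let $q$ be an odd prime distinct from $r$, let $R=\mathrm{C}_q\times\mathrm{D}_{2r}$, and let $S\subseteq R$ with $S=S^{-1}$. If $\mathrm{Cay}(R,S)$ is a nontrivial generalised wreath product with respect to subgroups $K$ and $H$, and $K$ has prime order, then $\mathrm{Aut}(R)_S>1$.
   Context: $\mathrm{C}_q$ is the cyclic group of order $q$, $\mathrm{D}_{2r}$ the dihedral group of order $2r$. $\mathrm{Aut}(R)_S$ is the group of automorphisms of $R$ fixing $S$ setwise. $\mathrm{Cay}(R,S)$ (vertex set $R$, arcs $r\to sr$ for $s\in S$) is a nontrivial generalised wreath product with respect to $K$ and $H$ if $1<K\trianglelefteq H<R$ and $K(S\setminus H)=S\setminus H=(S\setminus H)K$. *)

(* Defs.v *)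
From mathcomp Require Import all_boot all_fingroup all_algebra all_solvable.
Set Implicit Arguments. Unset Strict Implicit. Unset Printing Implicit Defensive.

Open Scope group_scope.

(* The group C_q x D_{2r}, as the external direct product of the additive
   group 'Z_q (cyclic of order q, for q >= 2) and MathComp's dihedral group
   'D_(2r) of order 2r (for r >= 2). *)
Definition CqD2r (q r : nat) : finGroupType := ('Z_q * 'D_(2 * r))%type.

Definition gen_wreath (gT : finGroupType) (R : {set gT}) (S : {set gT})
  (K H : {group gT}) : Prop :=
  [/\ K :!=: 1, K <| H, H \proper R,
      K * (S :\: H) = S :\: H & (S :\: H) * K = S :\: H].

Definition AutS (gT : finGroupType) (R S : {set gT}) : {set {perm gT}} :=
  [set a in Aut R | a @: S == S].

(* Main.v *)
Require Import Defs.
From mathcomp Require Import all_boot all_fingroup all_algebra all_solvable.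
From mathcomp Require Import zify.
Set Implicit Arguments. Unset Strict Implicit. Unset Printing Implicit Defensive.
Open Scope group_scope.
Section S5. Local Open Scope nat_scope.
Lemma sym5 (b : nat -> bool) : exists2 j, (j < 5)%N & forall i, (i < 5)%N -> b i -> b ((2*j + 5 - i) %% 5)%N.
Proof.
case B0: (b 0); case B1: (b 1); case B2: (b 2); case B3: (b 3); case B4: (b 4);
 first [ exists 0%N; [done| by case=> [|[|[|[|[|i]]]]] //=; rewrite ?B0 ?B1 ?B2 ?B3 ?B4]
 | exists 1%N; [done| by case=> [|[|[|[|[|i]]]]] //=; rewrite ?B0 ?B1 ?B2 ?B3 ?B4]
 | exists 2%N; [done| by case=> [|[|[|[|[|i]]]]] //=; rewrite ?B0 ?B1 ?B2 ?B3 ?B4]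
 | exists 3%N; [done| by case=> [|[|[|[|[|i]]]]] //=; rewrite ?B0 ?B1 ?B2 ?B3 ?B4]
 | exists 4%N; [done| by case=> [|[|[|[|[|i]]]]] //=; rewrite ?B0 ?B1 ?B2 ?B3 ?B4] ].
Qed.
Lemma sym3 (b : nat -> bool) : exists2 j, (j < 3)%N & forall i, (i < 3)%N -> b i -> b ((2*j + 3 - i) %% 3)%N.
Proof.
case B0: (b 0); case B1: (b 1); case B2: (b 2);
 first [ exists 0%N; [done| by case=> [|[|[|i]]] //=; rewrite ?B0 ?B1 ?B2]
 | exists 1%N; [done| by case=> [|[|[|i]]] //=; rewrite ?B0 ?B1 ?B2]
 | exists 2%N; [done| by case=> [|[|[|i]]] //=; rewrite ?B0 ?B1 ?B2] ].
Qed.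
End S5.
Section Dih.
Variables (gT : finGroupType) (x y : gT) (r : nat).
Hypotheses (pr : prime r) (oddr : odd r) (cardT : #|[set: gT]| = (2 * r)%N)
  (gen : <[x]> <*> <[y]> = [set: gT]) (xr : x ^+ r = 1) (y2 : y ^+ 2 = 1)
  (xy : x ^ y = x^-1).
Let C := <[x]>.

Lemma yV : y^-1 = y.
Proof. by apply/eqP; rewrite eq_invg_mul -y2 expgS expg1. Qed.

Lemma nCT g : g \in 'N(C).
Proof.
have : [set: gT] \subset 'N(C).
  rewrite -gen join_subG; apply/andP; split.
    exact: normG.
  by rewrite norms_cycle xy groupV cycle_id.
by move/subsetP; apply; rewrite inE.
Qed.

Lemma CT : C * <[y]> = [set: gT].
Proof. by rewrite -norm_joinEr ?gen //; apply/subsetP => g _; apply: nCT. Qed.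

Lemma cardC : #|C| = r.
Proof.
have h1 : #|C| %| r by rewrite -orderE order_dvdn xr.
have h2 : (#|<[y]>| <= 2)%N by rewrite -orderE dvdn_leq // order_dvdn y2.
have h3 : (2 * r <= #|C| * 2)%N.
  rewrite -cardT -CT; apply: (@leq_trans (#|C| * #|<[y]>|)).
    by rewrite mul_cardG leq_pmulr ?cardG_gt0.
  exact: leq_mul (leqnn _) h2.
have rpos : (0 < r)%N by apply: prime_gt0.
have h5 := dvdn_leq rpos h1.
apply/eqP; rewrite eqn_leq h5 /=.
by move: h3; rewrite [X in (_ <= X)]mulnC leq_pmul2l.
Qed.

Lemma yC : y \notin C.
Proof.
apply/negP => yC.
have : [set: gT] \subset C by rewrite -CT mul_subG // cycle_subG.
move/subset_leq_card; rewrite cardT cardC.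
have rpos : (0 < r)%N by apply: prime_gt0.
by rewrite leqNgt -{1}(mul1n r) ltn_pmul2r.
Qed.

Lemma CJ d g : (d ^ g \in C) = (d \in C).
Proof. exact: memJ_norm (nCT g). Qed.

Lemma notC_form d : d \notin C -> exists2 c, c \in C & d = c * y.
Proof.
move=> dC; have : d \in C * <[y]> by rewrite CT inE.
case/mulsgP => c yj Cc /cycleP[j ->] dE.
exists c => //; rewrite -(expg_mod j y2) modn2 in dE; rewrite dE.
case oj: (odd j) => //=.

by move: dC; rewrite dE oj /= expg0 mulg1 Cc.
Qed.

Lemma conjyC c : c \in C -> c ^ y = c^-1.
Proof. by case/cycleP => i ->; rewrite conjXg xy expgVn. Qed.

Lemma invD d : d \notin C -> d^-1 = d.
Proof.
case/notC_form => c Cc ->.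
by rewrite invMg yV [c * y]conjgC conjyC.
Qed.

Lemma commC c d : c \in C -> d \in C -> commute c d.
Proof. by case/cycleP => i -> /cycleP[j ->]; apply: commuteX2. Qed.

Lemma conjnotC g d : g \notin C -> d \in C -> d ^ g = d^-1.
Proof.
case/notC_form => c Cc -> Cd.
by rewrite conjgM [d ^ c]conjgE (commC Cd Cc) mulKg conjyC.
Qed.

Lemma mulnotC u v : u \notin C -> v \notin C -> u * v \in C.
Proof.
move=> uC vC; rewrite -(invD vC).
case/notC_form: uC => c Cc ->; case/notC_form: vC => c' Cc' ->.
by rewrite invMg mulgA mulgK groupM ?groupV.
Qed.

Lemma C_inv_eq1 c : c \in C -> c^-1 = c -> c = 1.
Proof.
move=> Cc cV; apply/eqP; rewrite -order_eq1 -dvdn1.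
have co : coprime 2 r by rewrite coprime2n.
rewrite -(eqnP co) dvdn_gcd; apply/andP; split.
  by rewrite order_dvdn expgS expg1 -{1}cV mulVg.
by rewrite -cardC order_dvdG.
Qed.

Lemma cent_notC u d : u \notin C -> d * u = u * d -> d = 1 \/ d = u.
Proof.
move=> uC du.
have cf : forall e, e \in C -> e * u = u * e -> e = 1.
  move=> e Ce eu; apply: C_inv_eq1 => //.
  by rewrite -(conjnotC uC Ce) conjgE eu mulKg.
case Cd: (d \in C); first by left; apply: cf.
right; have Cud : u * d \in C by apply: mulnotC => //; rewrite Cd.
have h : (u * d) * u = u * (u * d) by rewrite -mulgA du mulgA.
have ud := cf _ Cud h.
by rewrite -(mulKg u d) ud mulg1 (invD uC).
Qed.

Hypothesis symr : forall b : nat -> bool, exists2 j, (j < r)%N &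
  forall i, (i < r)%N -> b i -> b ((2*j + r - i) %% r)%N.

Lemma D7 (T : {set gT}) : T \subset ~: C ->
  exists2 g, g \notin C & forall u, u \in T -> u ^ g \in T.
Proof.
move=> TC.
have [j jr Hj] := symr (fun i => x ^+ i * y \in T).
have gC : x ^+ j * y \notin C.
  apply/negP => gC; move/negP: yC; apply.
  by rewrite -(mulKg (x ^+ j) y) groupM ?groupV ?mem_cycle.
exists (x ^+ j * y) => // u Tu.
have uC : u \notin C by have := subsetP TC u Tu; rewrite inE.
case/notC_form: (uC) => c /cycleP[i0 ->] uE.
have ir : (i0 %% r < r)%N by rewrite ltn_mod prime_gt0.
have Tu' : x ^+ (i0 %% r) * y \in T by rewrite expg_mod // -uE.
have := Hj _ ir Tu'; set k := ((2 * j + r - i0 %% r) %% r)%N.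
suff -> : u ^ (x ^+ j * y) = x ^+ k * y by [].
rewrite uE -(expg_mod i0 xr) conjgE (invD gC).
set i := (i0 %% r)%N.
have yxy : y * (x ^+ i * y) = (x ^+ i)^-1 by rewrite -conjyC ?mem_cycle // conjgE yV.
have xi : (x ^+ i)^-1 = x ^+ (r - i).
  apply/eqP; rewrite eq_invg_mul -expgD subnKC ?xr //; exact: ltnW.
rewrite /k expg_mod // mulgA -(mulgA _ y) yxy xi.
rewrite !mulgA -!expgD.
by congr (x ^+ _ * y); rewrite /i; move: ir; set t := (i0 %% r)%N; lia.
Qed.

Lemma dih_facts : [/\ #|C| = r, (forall d, d \notin C -> d^-1 = d),
  (forall g d, g \notin C -> d \in C -> d ^ g = d^-1),
  (forall d g, (d ^ g \in C) = (d \in C)) & [/\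
  (forall u v, u \notin C -> v \notin C -> u * v \in C),
  (forall u d, u \notin C -> d * u = u * d -> d = 1 \/ d = u) &
  (forall T : {set gT}, T \subset ~: C ->
     exists2 g, g \notin C & forall u, u \in T -> u ^ g \in T)]].
Proof.
split; [ | | | | split].
- exact: cardC.
- exact: invD.
- exact: conjnotC.
- exact: CJ.
- exact: mulnotC.
- exact: cent_notC.
- exact: D7.
Qed.
End Dih.

Lemma expg_pair (A B : finGroupType) (x : A * B) n : x ^+ n = (x.1 ^+ n, x.2 ^+ n).
Proof. elim: n => [|n IH]; first by case: x. by rewrite !expgS IH. Qed.

Lemma inv_eq_1 (T : finGroupType) (t : T) : odd #|T| -> t^-1 = t -> t = 1.
Proof.
move=> oT tV; apply/eqP; rewrite -order_eq1 -dvdn1.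
have co : coprime 2 #|T| by rewrite coprime2n.
rewrite -(eqnP co) dvdn_gcd; apply/andP; split.
  by rewrite order_dvdn expgS expg1 -{1}tV mulVg.
by rewrite -cardsT order_dvdG ?inE.
Qed.

Section Main.
Variables (Z D : finGroupType) (C : {group D}) (q r : nat).
Hypotheses (qpr : prime q) (qodd : odd q) (rpr : prime r) (rodd : odd r) (qr : q != r)
 (cZ : #|Z| = q) (Zab : forall a b : Z, a * b = b * a)
 (cD : #|D| = (2 * r)%N) (cC : #|C| = r)
 (invD : forall d, d \notin C -> d^-1 = d)
 (conjnotC : forall g d, g \notin C -> d \in C -> d ^ g = d^-1)
 (CJ : forall d g, (d ^ g \in C) = (d \in C))
 (mulnotC : forall u v, u \notin C -> v \notin C -> u * v \in C)
 (cent_notC : forall u d, u \notin C -> d * u = u * d -> d = 1 \/ d = u)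
 (D7 : forall T : {set D}, T \subset ~: C ->
     exists2 g, g \notin C & forall u, u \in T -> u ^ g \in T).

Local Notation G := (Z * D)%type.

Definition fg (g : D) (a : G) : G := (a.1^-1, a.2 ^ g).

Lemma fg_inj g : injective (fg g).
Proof. by move=> [a1 a2] [b1 b2] [/invg_inj -> /conjg_inj ->]. Qed.

Lemma autS_ne1 (S : {set G}) g : (forall s, s \in S -> fg g s \in S) ->
  AutS [set: G] S != 1.
Proof.
move=> hS.
pose p := perm (@fg_inj g).
have pA : p \in AutS [set: G] S.
  rewrite inE; apply/andP; split.
    rewrite inE; apply/andP; split.
      by apply/subsetP => a _; rewrite inE.
    apply/morphicP => a b _ _; rewrite !permE /fg /=.
    by rewrite invMg Zab conjMg.
  rewrite eqEcard card_imset; last exact: perm_inj.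
  rewrite leqnn andbT; apply/subsetP => _ /imsetP[s Ss ->].
  by rewrite permE; apply: hS.
have [z nz] : exists z : Z, z != 1.
  case: (pickP (fun z : Z => z != 1)) => [z nz | all1]; first by exists z.
  have : [set: Z] \subset [set 1].
    by apply/subsetP => z _; rewrite inE; move: (all1 z) => /= /negbFE.
  move/subset_leq_card; rewrite cardsT cards1 cZ leqNgt prime_gt1 //.
have zV : z^-1 != z.
  apply/negP => /eqP zV; move/eqP: nz; apply; apply: inv_eq_1 => //.
  by rewrite cZ.
apply/negP => /eqP A1; move: pA; rewrite A1 inE => /eqP p1.
have := congr1 (fun f : {perm G} => f (z, 1)) p1.
rewrite permE perm1 /fg /= conj1g => [[zz]].
by rewrite zz eqxx in zV.
Qed.


Lemma ord1 (a : G) : #[a.1] %| #[a].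
Proof.
rewrite order_dvdn; have := expg_order a; rewrite expg_pair.
by move/(congr1 fst) => /= ->.
Qed.

Lemma ord2 (a : G) : #[a.2] %| #[a].
Proof.
rewrite order_dvdn; have := expg_order a; rewrite expg_pair.
by move/(congr1 snd) => /= ->.
Qed.

Lemma ordZ (z : Z) : z != 1 -> #[z] = q.
Proof.
move=> nz; have dv : #[z] %| q by rewrite -cZ -cardsT order_dvdG ?inE.
case/primeP: qpr => _ /(_ _ dv) /orP[|/eqP //].
by rewrite order_eq1 (negbTE nz).
Qed.

Lemma ordnotC (d : D) : d \notin C -> #[d] = 2.
Proof.
move=> dC; have dv : #[d] %| 2 by rewrite order_dvdn expgS expg1 -{1}(invD dC) mulVg.
case/primeP: (isT : prime 2) => _ /(_ _ dv) /orP[|/eqP //].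
rewrite order_eq1 => /eqP d1; by move: dC; rewrite d1 group1.
Qed.

Lemma ordC (d : D) : d \in C -> d != 1 -> #[d] = r.
Proof.
move=> Cd nd; have dv : #[d] %| r by rewrite -cC order_dvdG.
case/primeP: rpr => _ /(_ _ dv) /orP[|/eqP //].
by rewrite order_eq1 (negbTE nd).
Qed.

Lemma cardG : #|[set: G]| = (q * (2 * r))%N.
Proof. by rewrite cardsT card_prod cZ cD. Qed.

Lemma bigH (H : {group G}) : H \proper [set: G] ->
  2 %| #|H| -> q %| #|H| -> r %| #|H| -> False.
Proof.
move=> pH d2 dq dr.
have c2q : coprime 2 q by rewrite coprime2n.
have c2r : coprime 2 r by rewrite coprime2n.
have cqr : coprime q r by rewrite prime_coprime // dvdn_prime2.
have c : (2 * q * r) %| #|H|.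
  rewrite Gauss_dvd ?coprimeMl ?c2r ?cqr // dr andbT.
  by rewrite Gauss_dvd ?d2.
have := dvdn_leq (cardG_gt0 H) c.
have := proper_card pH; rewrite cardG.
rewrite mulnA [(q * 2)%N]mulnC => h1 h2.
by move: (leq_ltn_trans h2 h1); rewrite ltnn.
Qed.

Lemma pairE (a : G) : a = (a.1, a.2). Proof. by case: a. Qed.
Lemma pair_ext (a b : G) : a.1 = b.1 -> a.2 = b.2 -> a = b.
Proof. by case: a; case: b => /= ? ? ? ? -> ->. Qed.

Lemma fg_inv (S : {set G}) g s : S^-1 = S -> s \in S -> s.2 ^ g = s.2^-1 ->
  fg g s \in S.
Proof.
move=> SV Ss e; rewrite /fg e.
have : s^-1 \in S^-1 by rewrite memV_invg.
by rewrite SV.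
Qed.

Section Wreath.
Variables (S : {set G}) (K H : {group G}).
Hypotheses (SV : S^-1 = S) (gw : gen_wreath [set: G] S K H).

Lemma clos s k1 k2 : s \in S -> s \notin H -> k1 \in K -> k2 \in K ->
  k1 * s * k2 \in S /\ k1 * s^-1 * k2 \in S.
Proof.
case: gw => _ _ _ KS SK Ss sH Kk1 Kk2.
have c : forall t, t \in S :\: H -> k1 * t * k2 \in S.
  move=> t t1.
  have : k1 * t \in S :\: H by rewrite -KS mem_mulg.
  move=> t2; have : k1 * t * k2 \in S :\: H by rewrite -SK mem_mulg.
  by rewrite inE => /andP[].
split; apply: c; rewrite inE ?Ss ?sH //.
rewrite groupV sH /=.
have : s^-1 \in S^-1 by rewrite memV_invg.
by rewrite SV.
Qed.


Theorem core : prime #|K| -> AutS [set: G] S != 1.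
Proof.
move=> pK; have gw' := gw; case: gw' => K1 nKH pH _ _.
have sKH : K \subset H := normal_sub nKH.
have dK : #|K| %| q * (2 * r) by rewrite -cardG cardSg ?subsetT.
have hK : #|K| = q \/ #|K| = 2 \/ #|K| = r.
  move: dK; rewrite !Euclid_dvdM // !dvdn_prime2 // => /orP[/eqP|/orP[/eqP|/eqP]]; auto.
case: hK => [cK | [cK | cK]].
-
  have Kfull : forall z : Z, ((z, 1) : G) \in K.
    pose Kq := [set ((z, 1) : G) | z in [set: Z]].
    have sub : K \subset Kq.
      apply/subsetP => a Ka.
      have a21 : a.2 = 1.
        apply/eqP; rewrite -order_eq1 -dvdn1.
        have cq : coprime q (2 * r).
          by rewrite coprimeMr coprime_sym coprime2n qodd /= prime_coprime // dvdn_prime2.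
        rewrite -(eqnP cq) dvdn_gcd; apply/andP; split.
          by rewrite -cK (dvdn_trans (ord2 a)) // order_dvdG.
        by rewrite -cD -cardsT order_dvdG ?inE.
      by rewrite (pairE a) a21 imset_f ?inE.
    have : K :==: Kq.
      rewrite eqEcard sub /= card_imset; last by move=> x y [].
      by rewrite cardsT cZ cK.
    by move/eqP => -> z; rewrite imset_f ?inE.
  have qH : q %| #|H| by rewrite -cK cardSg.
  case: (boolP (H \subset [set a : G | a.2 \in C])) => HC.
  + pose T := [set d : D | (d \notin C) && [exists a in S, a.2 == d]].
    have TC : T \subset ~: C by apply/subsetP => d; rewrite !inE => /andP[].
    have [g gC Tg] := D7 TC.
    apply: (@autS_ne1 _ g) => s Ss.
    case Cs: (s.2 \in C); first by apply: fg_inv => //; rewrite conjnotC.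
    have sT : s.2 \in T.
      by rewrite inE Cs /=; apply/existsP; exists s; rewrite Ss eqxx.
    have := Tg _ sT; rewrite inE => /andP[ngC /existsP[a /andP[Sa /eqP a2]]].
    have aH : a \notin H.
      apply/negP => aH; have := subsetP HC a aH; rewrite inE a2.
      by rewrite (negbTE ngC).
    have [c _] := clos Sa aH (Kfull (s.1^-1 * a.1^-1)) (group1 K).
    suff -> : fg g s = ((s.1^-1 * a.1^-1, 1) : G) * a * 1 by [].
    rewrite mulg1; apply: pair_ext => /=; first by rewrite mulgKV.
    by rewrite mul1g a2.
  + case/subsetPn: HC => h Hh; rewrite inE => hC.
    have Hcl : forall a, a \in H -> a.2 = 1 \/ a.2 \notin C.
      move=> a Ha; case Ca: (a.2 \in C); last by right.
      left; apply/eqP; apply/negP => /negP na1; apply: (bigH pH) => //.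
        by rewrite -(ordnotC hC) (dvdn_trans (ord2 h)) // order_dvdG.
      by rewrite -(ordC Ca na1) (dvdn_trans (ord2 a)) // order_dvdG.
    apply: (@autS_ne1 _ 1) => s Ss.
    case sH: (s \in H).
      apply: fg_inv => //; rewrite conjg1.
      by case: (Hcl s sH) => [-> | /invD ->]; rewrite ?invg1.
    have [c _] := clos Ss (negbT sH) (Kfull (s.1^-1 * s.1^-1)) (group1 K).
    suff -> : fg 1 s = ((s.1^-1 * s.1^-1, 1) : G) * s * 1 by [].
    rewrite mulg1; apply: pair_ext => /=; first by rewrite mulgKV.
    by rewrite mul1g conjg1.
-
  case/trivgPn: K1 => k Kk nk.
  have k1 : k.1 = 1.
    apply/eqP; apply/negP => /negP nk1.
    have := dvdn_trans (ord1 k) (order_dvdG Kk); rewrite cK (ordZ nk1) dvdn_prime2 //.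
    by move/eqP => q2; move: qodd; rewrite q2.
  set u := k.2.
  have ku : k = (1, u) by rewrite (pairE k) k1.
  have uC : u \notin C.
    apply/negP => Cu.
    have nu : u != 1 by apply: contra nk => /eqP u1; rewrite ku u1.
    have := dvdn_trans (ord2 k) (order_dvdG Kk); rewrite cK -/u (ordC Cu nu) dvdn_prime2 //.
    by move/eqP => r2; move: rodd; rewrite r2.
  have K2 : forall a, a \in K -> a = 1 \/ a = k.
    have s1 : [set 1; k] \subset K by apply/subsetP => a /set2P[]->; rewrite ?group1.
    have : [set 1; k] :==: K by rewrite eqEcard s1 /= cards2 eq_sym nk cK.
    by move/eqP => KE a; rewrite -KE => /set2P[]; auto.
  apply: (@autS_ne1 _ u) => s Ss.
  case sH: (s \in H).
  + have nK : s \in 'N(K) := subsetP (normal_norm nKH) s sH.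
    have kJ : k ^ s \in K by rewrite memJ_norm.
    have kJk : k ^ s = k.
      by case: (K2 _ kJ) => // /eqP; rewrite conjg_eq1 (negbTE nk).
    have su : s.2 * u = u * s.2.
      move: kJk; rewrite {2}ku conjgE => /(congr1 snd) /= e.
      have := congr1 (mulg s.2) e; rewrite mulKVg => ->.
      by [].
    apply: fg_inv => //.
    case: (cent_notC uC su) => ->; first by rewrite conj1g invg1.
    by rewrite (invD uC); apply: (mulgI u); rewrite -conjgC.
  + case Cs: (s.2 \in C); first by apply: fg_inv => //; rewrite conjnotC.
    have [_ c] := clos Ss (negbT sH) Kk Kk.
    suff -> : fg u s = k * s^-1 * k by [].
    apply: pair_ext; rewrite ku /=; first by rewrite mul1g mulg1.
    by rewrite conjgE (invD uC) (invD (negbT Cs)) mulgA.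
-
  have Kfull : forall c, c \in C -> ((1, c) : G) \in K.
    pose Kr := [set ((1, c) : G) | c in C].
    have sub : K \subset Kr.
      apply/subsetP => a Ka.
      have da : #[a] %| r by rewrite -cK order_dvdG.
      have a1 : a.1 = 1.
        apply/eqP/negP => /negP na1; have := dvdn_trans (ord1 a) da.
        by rewrite (ordZ na1) dvdn_prime2 // (negbTE qr).
      have a2 : a.2 \in C.
        case Ca: (a.2 \in C) => //; have := dvdn_trans (ord2 a) da.
        by rewrite (ordnotC (negbT Ca)) dvdn2 rodd.
      by rewrite (pairE a) a1 imset_f.
    have : K :==: Kr.
      rewrite eqEcard sub /= card_imset; last by move=> x y [].
      by rewrite cC cK.
    by move/eqP => -> c Cc; rewrite imset_f.
  have rH : r %| #|H| by rewrite -cK cardSg.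
  have step : forall g s, g \notin C -> s \in S -> s \notin H -> s.2 \notin C ->
      fg g s \in S.
    move=> g s gC Ss sH sC.
    have Cc : s.2 * s.2 ^ g \in C by apply: mulnotC; rewrite // CJ.
    have [_ c] := clos Ss sH (group1 K) (Kfull _ Cc).
    suff -> : fg g s = 1 * s^-1 * ((1, s.2 * s.2 ^ g) : G) by [].
    rewrite mul1g; apply: pair_ext => /=; first by rewrite mulg1.
    by symmetry; apply: mulKg.
  case: (boolP (H \subset [set a : G | a.1 == 1])) => H1.
  + pose T := [set d : D | (d \notin C) && (((1, d) : G) \in S)].
    have TC : T \subset ~: C by apply/subsetP => d; rewrite !inE => /andP[].
    have [g gC Tg] := D7 TC.
    apply: (@autS_ne1 _ g) => s Ss.
    case Cs: (s.2 \in C); first by apply: fg_inv => //; rewrite conjnotC.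
    case sH: (s \in H); last by apply: step; rewrite ?Cs ?sH.
    have s1 : s.1 = 1 by have := subsetP H1 s sH; rewrite inE => /eqP.
    have sT : s.2 \in T by rewrite inE Cs /= -s1 -pairE.
    have := Tg _ sT; rewrite inE => /andP[_ Sg].
    by rewrite /fg s1 invg1.
  + case/subsetPn: H1 => h Hh; rewrite inE => h1.
    have HC : forall a, a \in H -> a.2 \in C.
      move=> a Ha; apply/negP => /negP aC; apply: (bigH pH) => //.
        by rewrite -(ordnotC aC) (dvdn_trans (ord2 a)) // order_dvdG.
      by rewrite -(ordZ h1) (dvdn_trans (ord1 h)) // order_dvdG.
    have [g gC _] := D7 (sub0set (~: C)).
    apply: (@autS_ne1 _ g) => s Ss.
    case Cs: (s.2 \in C); first by apply: fg_inv => //; rewrite conjnotC.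
    apply: step; rewrite ?Cs //.
    by apply/negP => sH; move: (HC s sH); rewrite Cs.
Qed.

End Wreath.

End Main.

Lemma main_gen (r q : nat) (S : {set ('Z_q * 'D_(r.*2))%type})
  (K H : {group ('Z_q * 'D_(r.*2))%type}) :
  prime r -> odd r ->
  (forall b : nat -> bool, exists2 j, (j < r)%N &
     forall i, (i < r)%N -> b i -> b ((2*j + r - i) %% r)%N) ->
  prime q -> odd q -> q != r -> S^-1 = S ->
  gen_wreath [set: ('Z_q * 'D_(r.*2))%type] S K H -> prime #|K| ->
  AutS [set: ('Z_q * 'D_(r.*2))%type] S != 1.
Proof.
move=> rpr rodd symr qpr qodd qr SV gw pK.
have q1 : (1 < q)%N := prime_gt1 qpr.
have r1 : (1 < r)%N := prime_gt1 rpr.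
have := isoGrp_hom (Grp_dihedral r1).
case/existsP => -[x y] /= /eqP[defG xr y2 xy].
have cT : #|[set: 'D_(r.*2)]| = (2 * r)%N by rewrite card_dihedral // mul2n.
have [cC invD conjnotC CJ [mulnotC cent_notC D7]] :=
  dih_facts rpr rodd cT defG xr y2 xy symr.
refine (@core _ _ <[x]>%G q r _ _ _ _ _ _ _ _ _ _ _ _ _ _ _ S K H SV gw pK) => //.
- by rewrite card_ord Zp_cast.
- exact: Zp_mulgC.
- by rewrite -cardsT.
Qed.

Theorem proposition4p10 (r q : nat) (S : {set CqD2r q r}) (K H : {group CqD2r q r}) :
  r \in [:: 3; 5]%N -> prime q -> odd q -> q != r ->
  S \subset [set: CqD2r q r] -> S^-1 = S ->
  gen_wreath [set: CqD2r q r] S K H -> prime #|K| ->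
  AutS [set: CqD2r q r] S :!=: 1.
Proof.
rewrite !inE => /orP[/eqP Er | /eqP Er]; subst r => qpr qodd qr _ SV gw pK.
- exact: (@main_gen 3 q S K H isT isT sym3 qpr qodd qr SV gw pK).
- exact: (@main_gen 5 q S K H isT isT sym5 qpr qodd qr SV gw pK).
Qed.
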